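(* For integers $n$ and $a$ with $n\ge a$, $$J\mathcal{G}_{n+a}^{(3)}J\mathcal{G}_{n-a}^{(3)}-\left[J\mathcal{G}_{n}^{(3)}\right]^{2}=\frac{1}{49}\Big\{2^{n+1}\left[\Theta Y_{n-a}(a)-2^{-a}Y_{n}(a)\Theta\right]-X_{a}\left[X_{a}\Xi-14X_{a+1}\Omega\right]\Big\}$$ and $$K\mathcal{G}_{n+a}^{(3)}K\mathcal{G}_{n-a}^{(3)}-\left[K\mathcal{G}_{n}^{(3)}\right]^{2}=2^{n}\left[\Theta Y^{*}_{n-a}(a)-2^{-a}Y^{*}_{n}(a)\Theta\right]-X_{a}\left[X_{a}\Xi^{*}-6X_{a+1}\Omega\right],$$ where $Y_{n}(a)=X_{n}(2^{a}\mathbf{A}+X_{a+2}\mathbf{A}-X_{a}\mathbf{B})-X_{n+1}(2^{a}\mathbf{B}+X_{a}\mathbf{A}-X_{a+1}\mathbf{B})$, $Y^{*}_{n}(a)=X_{n}(2^{a}\mathbf{C}+X_{a+2}\mathbf{C}-X_{a}\mathbf{D})-X_{n+1}(2^{a}\mathbf{D}+X_{a}\mathbf{C}-X_{a+1}\mathbf{D})$, $\Xi=\mathbf{A}^2+\mathbf{A}\mathbf{B}+\mathbf{B}^2$ and $\Xi^{*}=\mathbf{C}^2+\mathbf{C}\mathbf{D}+\mathbf{D}^2$.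
   Context: Fix real numbers $\lambda_1,\lambda_2,\lambda_3$. The algebra $\mathbb{H}_{\lambda_1,\lambda_2,\lambda_3}$ of 3-parameter generalized quaternions is the real associative algebra of elements $\psi_0+\psi_1\mathbf{e}_1+\psi_2\mathbf{e}_2+\psi_3\mathbf{e}_3$ ($\psi_i\in\mathbb{R}$) with $\mathbf{e}_1^2=-\lambda_1\lambda_2$, $\mathbf{e}_2^2=-\lambda_1\lambda_3$, $\mathbf{e}_3^2=-\lambda_2\lambda_3$, $\mathbf{e}_1\mathbf{e}_2=-\mathbf{e}_2\mathbf{e}_1=\lambda_1\mathbf{e}_3$, $\mathbf{e}_1\mathbf{e}_3=-\mathbf{e}_3\mathbf{e}_1=-\lambda_2\mathbf{e}_2$, $\mathbf{e}_2\mathbf{e}_3=-\mathbf{e}_3\mathbf{e}_2=\lambda_3\mathbf{e}_1$. The third-order Jacobsthal numbers satisfy $J_0^{(3)}=0$, $J_1^{(3)}=J_2^{(3)}=1$, $J_n^{(3)}=J_{n-1}^{(3)}+J_{n-2}^{(3)}+2J_{n-3}^{(3)}$; the modified third-order Jacobsthal numbers satisfy $K_0^{(3)}=3$, $K_1^{(3)}=1$, $K_2^{(3)}=3$, $K_n^{(3)}=K_{n-1}^{(3)}+K_{n-2}^{(3)}+2K_{n-3}^{(3)}$; both are extended to all integers $n$ by running the recurrence backwards (equivalently by the Binet formulas $J_n^{(3)}=\frac17[2^{n+1}+X_n-2X_{n+1}]$, $K_n^{(3)}=2^n+X_n+2X_{n+1}$). For all integers $n$ define $J\mathcal{G}_n^{(3)}=J_n^{(3)}+J_{n+1}^{(3)}\mathbf{e}_1+J_{n+2}^{(3)}\mathbf{e}_2+J_{n+3}^{(3)}\mathbf{e}_3$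 and $K\mathcal{G}_n^{(3)}=K_n^{(3)}+K_{n+1}^{(3)}\mathbf{e}_1+K_{n+2}^{(3)}\mathbf{e}_2+K_{n+3}^{(3)}\mathbf{e}_3$. Here $X_n=0,1,-1$ according as $n\equiv0,1,2\pmod 3$, $\Theta=1+2\mathbf{e}_1+4\mathbf{e}_2+8\mathbf{e}_3$, $\mathbf{A}=1+2\mathbf{e}_1-3\mathbf{e}_2+\mathbf{e}_3$, $\mathbf{B}=2-3\mathbf{e}_1+\mathbf{e}_2+2\mathbf{e}_3$, $\mathbf{C}=1-2\mathbf{e}_1+\mathbf{e}_2+\mathbf{e}_3$, $\mathbf{D}=-2+\mathbf{e}_1+\mathbf{e}_2-2\mathbf{e}_3$, and $\Omega=\lambda_3\mathbf{e}_1+\lambda_2\mathbf{e}_2+\lambda_1\mathbf{e}_3$. *)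

(* Defs.v *)
From Stdlib Require Import Reals ZArith.
Open Scope R_scope.

Record quat := mkQ { q0 : R; q1 : R; q2 : R; q3 : R }.

Definition qadd (p q : quat) : quat :=
  mkQ (q0 p + q0 q) (q1 p + q1 q) (q2 p + q2 q) (q3 p + q3 q).
Definition qscale (c : R) (p : quat) : quat :=
  mkQ (c * q0 p) (c * q1 p) (c * q2 p) (c * q3 p).
Definition qsub (p q : quat) : quat := qadd p (qscale (-1) q).

(* Multiplication determined bilinearly by
   e1^2=-l1 l2, e2^2=-l1 l3, e3^2=-l2 l3,
   e1e2=-e2e1=l1 e3, e1e3=-e3e1=-l2 e2, e2e3=-e3e2=l3 e1. *)
Definition qmul (l1 l2 l3 : R) (a b : quat) : quat :=
  mkQ (q0 a * q0 b - l1 * l2 * (q1 a * q1 b) - l1 * l3 * (q2 a * q2 b)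
         - l2 * l3 * (q3 a * q3 b))
      (q0 a * q1 b + q1 a * q0 b + l3 * (q2 a * q3 b - q3 a * q2 b))
      (q0 a * q2 b + q2 a * q0 b + l2 * (q3 a * q1 b - q1 a * q3 b))
      (q0 a * q3 b + q3 a * q0 b + l1 * (q1 a * q2 b - q2 a * q1 b)).

(* ---------- third-order recurrences t_n = t_{n-1}+t_{n-2}+2 t_{n-3},
   extended to all integers by running the recurrence backwards ---------- *)
Fixpoint fwd (x0 x1 x2 : R) (k : nat) : R :=
  match k with
  | O => x0
  | S k' => fwd x1 x2 (x2 + x1 + 2 * x0) k'
  end.
(* bwd x0 x1 x2 k = t_{-k}, using t_{m-1} = (t_{m+2} - t_{m+1} - t_m)/2 *)
Fixpoint bwd (x0 x1 x2 : R) (k : nat) : R :=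
  match k with
  | O => x0
  | S k' => bwd ((x2 - x1 - x0) / 2) x0 x1 k'
  end.
Definition seqZ (x0 x1 x2 : R) (n : Z) : R :=
  if (0 <=? n)%Z then fwd x0 x1 x2 (Z.to_nat n)
  else bwd x0 x1 x2 (Z.to_nat (- n)).

Definition Jac (n : Z) : R := seqZ 0 1 1 n.
Definition Kac (n : Z) : R := seqZ 3 1 3 n.

Definition Xs (n : Z) : R :=
  match (n mod 3)%Z with
  | 0%Z => 0
  | 1%Z => 1
  | _ => -1
  end.

Definition JG (n : Z) : quat :=
  mkQ (Jac n) (Jac (n + 1)) (Jac (n + 2)) (Jac (n + 3)).
Definition KG (n : Z) : quat :=
  mkQ (Kac n) (Kac (n + 1)) (Kac (n + 2)) (Kac (n + 3)).

Definition Theta : quat := mkQ 1 2 4 8.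
Definition QA : quat := mkQ 1 2 (-3) 1.
Definition QB : quat := mkQ 2 (-3) 1 2.
Definition QC : quat := mkQ 1 (-2) 1 1.
Definition QD : quat := mkQ (-2) 1 1 (-2).
Definition Omega (l1 l2 l3 : R) : quat := mkQ 0 l3 l2 l1.

Definition Ygen (P Q : quat) (n a : Z) : quat :=
  qsub
    (qscale (Xs n) (qsub (qadd (qscale (powerRZ 2 a) P) (qscale (Xs (a + 2)) P))
                         (qscale (Xs a) Q)))
    (qscale (Xs (n + 1)) (qsub (qadd (qscale (powerRZ 2 a) Q) (qscale (Xs a) P))
                               (qscale (Xs (a + 1)) Q))).
Definition Yf (n a : Z) : quat := Ygen QA QB n a.
Definition Ystar (n a : Z) : quat := Ygen QC QD n a.

Definition Xi (l1 l2 l3 : R) : quat :=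
  qadd (qadd (qmul l1 l2 l3 QA QA) (qmul l1 l2 l3 QA QB)) (qmul l1 l2 l3 QB QB).
Definition Xistar (l1 l2 l3 : R) : quat :=
  qadd (qadd (qmul l1 l2 l3 QC QC) (qmul l1 l2 l3 QC QD)) (qmul l1 l2 l3 QD QD).

(* Main.v *)
Require Import Defs.
From Stdlib Require Import Reals ZArith.
Open Scope R_scope.

From Stdlib Require Import Lia Lra.

Ltac zm := Z.to_euclidean_division_equations; lia.

Lemma X0 x : (x mod 3 = 0)%Z -> Xs x = 0.
Proof. intro H; unfold Xs; rewrite H; reflexivity. Qed.
Lemma X1 x : (x mod 3 = 1)%Z -> Xs x = 1.
Proof. intro H; unfold Xs; rewrite H; reflexivity. Qed.
Lemma X2 x : (x mod 3 = 2)%Z -> Xs x = -1.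
Proof. intro H; unfold Xs; rewrite H; reflexivity. Qed.

Ltac xsimp := repeat match goal with |- context [Xs ?e] =>
  first [rewrite (X0 e) by zm | rewrite (X1 e) by zm | rewrite (X2 e) by zm] end.

Lemma mod3 (n : Z) : (n mod 3 = 0 \/ n mod 3 = 1 \/ n mod 3 = 2)%Z.
Proof. pose proof (Z.mod_pos_bound n 3). lia. Qed.

Lemma p2nz : 2 <> 0. Proof. lra. Qed.
Lemma pw x y : powerRZ 2 (x + y) = powerRZ 2 x * powerRZ 2 y.
Proof. apply powerRZ_add, p2nz. Qed.

Section G.
Variable g : Z -> R.
Hypothesis Hg : forall m, g (m+3) = g (m+2) + g (m+1) + 2 * g m.

Lemma fwd_g : forall k m, fwd (g m) (g (m+1)) (g (m+2)) k = g (m + Z.of_nat k).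
Proof.
  induction k; intros m; simpl.
  - rewrite Z.add_0_r; reflexivity.
  - rewrite <- Hg. specialize (IHk (m+1)%Z).
    replace (m+1+1)%Z with (m+2)%Z in IHk by lia.
    replace (m+1+2)%Z with (m+3)%Z in IHk by lia.
    rewrite IHk; f_equal; lia.
Qed.

Lemma bwd_g : forall k m, bwd (g m) (g (m+1)) (g (m+2)) k = g (m - Z.of_nat k).
Proof.
  induction k; intros m; simpl.
  - rewrite Z.sub_0_r; reflexivity.
  - assert (E : (g (m + 2) - g (m + 1) - g m) / 2 = g (m-1)).
    { pose proof (Hg (m-1)) as H.
      replace (m-1+3)%Z with (m+2)%Z in H by lia.
      replace (m-1+2)%Z with (m+1)%Z in H by lia.
      replace (m-1+1)%Z with m in H by lia.
      rewrite H; field. }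
    rewrite E. specialize (IHk (m-1)%Z).
    replace (m-1+1)%Z with m in IHk by lia.
    replace (m-1+2)%Z with (m+1)%Z in IHk by lia.
    rewrite IHk; f_equal; lia.
Qed.

Lemma seqZ_g n : seqZ (g 0) (g 1) (g 2) n = g n.
Proof.
  unfold seqZ. destruct (0 <=? n)%Z eqn:E.
  - pose proof (fwd_g (Z.to_nat n) 0) as H. simpl in H. rewrite H.
    f_equal. apply Z.leb_le in E. lia.
  - pose proof (bwd_g (Z.to_nat (-n)) 0) as H. simpl in H. rewrite H.
    f_equal. apply Z.leb_gt in E. lia.
Qed.
End G.

Definition BJ (n : Z) : R := (2 * powerRZ 2 n + Xs n - 2 * Xs (n+1)) / 7.
Definition BK (n : Z) : R := powerRZ 2 n + Xs n + 2 * Xs (n+1).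

Lemma Xs3 m : Xs (m + 3) = Xs m.
Proof. unfold Xs. replace ((m+3) mod 3)%Z with (m mod 3)%Z by zm. reflexivity. Qed.

Lemma BJ_rec m : BJ (m+3) = BJ (m+2) + BJ (m+1) + 2 * BJ m.
Proof.
  unfold BJ. rewrite !pw. replace (m+3+1)%Z with (m+1+3)%Z by lia. rewrite !Xs3.
  replace (m+2+1)%Z with (m+3)%Z by lia. rewrite Xs3.
  change (powerRZ 2 3) with (2*(2*(2*1))). change (powerRZ 2 2) with (2*(2*1)).
  change (powerRZ 2 1) with (2*1).
  destruct (mod3 m) as [H|[H|H]]; xsimp; field.
Qed.

Lemma BK_rec m : BK (m+3) = BK (m+2) + BK (m+1) + 2 * BK m.
Proof.
  unfold BK. rewrite !pw. replace (m+3+1)%Z with (m+1+3)%Z by lia. rewrite !Xs3.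
  replace (m+2+1)%Z with (m+3)%Z by lia. rewrite Xs3.
  change (powerRZ 2 3) with (2*(2*(2*1))). change (powerRZ 2 2) with (2*(2*1)).
  change (powerRZ 2 1) with (2*1).
  destruct (mod3 m) as [H|[H|H]]; xsimp; field.
Qed.

Lemma JacB n : Jac n = BJ n.
Proof.
  pose proof (seqZ_g BJ BJ_rec n) as H.
  assert (E0 : BJ 0 = 0) by (unfold BJ, Xs; simpl; field).
  assert (E1 : BJ 1 = 1) by (unfold BJ, Xs; simpl; field).
  assert (E2 : BJ 2 = 1) by (unfold BJ, Xs; simpl; field).
  rewrite E0, E1, E2 in H. exact H.
Qed.

Lemma KacB n : Kac n = BK n.
Proof.
  pose proof (seqZ_g BK BK_rec n) as H.
  assert (E0 : BK 0 = 3) by (unfold BK, Xs; simpl; field).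
  assert (E1 : BK 1 = 1) by (unfold BK, Xs; simpl; field).
  assert (E2 : BK 2 = 3) by (unfold BK, Xs; simpl; field).
  rewrite E0, E1, E2 in H. exact H.
Qed.
Lemma qext (x y : quat) : q0 x = q0 y -> q1 x = q1 y -> q2 x = q2 y -> q3 x = q3 y -> x = y.
Proof. destruct x, y; simpl; intros; subst; reflexivity. Qed.

Theorem corollary3p2 (l1 l2 l3 : R) (n a : Z) (hna : (a <= n)%Z) :
  qsub (qmul l1 l2 l3 (JG (n + a)) (JG (n - a))) (qmul l1 l2 l3 (JG n) (JG n))
  = qscale (1 / 49)
      (qsub
        (qscale (powerRZ 2 (n + 1))
           (qsub (qmul l1 l2 l3 Theta (Yf (n - a) a))
                 (qscale (powerRZ 2 (- a)) (qmul l1 l2 l3 (Yf n a) Theta))))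
        (qscale (Xs a)
           (qsub (qscale (Xs a) (Xi l1 l2 l3))
                 (qscale (14 * Xs (a + 1)) (Omega l1 l2 l3)))))
  /\
  qsub (qmul l1 l2 l3 (KG (n + a)) (KG (n - a))) (qmul l1 l2 l3 (KG n) (KG n))
  = qsub
      (qscale (powerRZ 2 n)
         (qsub (qmul l1 l2 l3 Theta (Ystar (n - a) a))
               (qscale (powerRZ 2 (- a)) (qmul l1 l2 l3 (Ystar n a) Theta))))
      (qscale (Xs a)
         (qsub (qscale (Xs a) (Xistar l1 l2 l3))
               (qscale (6 * Xs (a + 1)) (Omega l1 l2 l3)))).
Proof.
  assert (HV : powerRZ 2 a <> 0) by (apply powerRZ_NOR, p2nz).
  destruct (mod3 n) as [Hn|[Hn|Hn]]; destruct (mod3 a) as [Ha|[Ha|Ha]]; split;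
  apply qext;
  cbn [q0 q1 q2 q3 qadd qsub qscale qmul JG KG Yf Ystar Ygen Xi Xistar Omega QA QB QC QD Theta];
  rewrite ?JacB, ?KacB; unfold BJ, BK; xsimp; unfold Z.sub;
  rewrite ?pw, ?powerRZ_neg';
  change (powerRZ 2 3) with (2*(2*(2*1))); change (powerRZ 2 2) with (2*(2*1));
  change (powerRZ 2 1) with (2*1);
  field; exact HV.
Qed.
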